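(* Let $S$ be a Riemannian circle and consider a tightening sequence for $S$ with tightened segments $Q_i$ and maps $\pi^{(i)}\colon S\to S_i$. If the tightening sequence is completely disjoint and $\sum_{i=0}^\infty|Q_i|<|S|$, then $\delta(x,y)=\lim_{i\to\infty}d_{S_i}(\pi^{(i)}(x),\pi^{(i)}(y))$ (for $x,y\in S$) is a well-defined pseudometric on $S$, and the induced metric quotient $S_\infty$ of $(S,\delta)$ is a Riemannian circle of length $\lim_{i\to\infty}|S_i|$.
   Context: A Riemannian circle is a circle with its length metric, of length $|S|$. Tightening sequence for $S$: Riemannian circles $S_0=S,S_1,\dots$, spaces $P_0,P_1,\dots$ (each a compact interval or Riemannian circle), maps $\iota_i\colon P_i\hookrightarrow S_i$, $\varphi_i\colon P_i\to S_{i+1}$, such that for each $i$ either (a) $\iota_i,\varphi_i$ are continuous unit-speed paths, $\varphi_i$ is injective on the interior $\mathring P_i$, $|P_i|\ge|S|/2$, $|S_{i+1}|<|S_i|$; or (b) $P_i=S_i=S_{i+1}$ with $\iota_i,\varphi_i$ identities. In case (a), $Q_i=S_i\setminus\iota_i(\mathring P_i)$ and $\bar Q_i=S_{i+1}\setminus\varphi_i(\mathring P_i)$ are closed segments with $|\bar Q_i|<|Q_i|$; in case (b) $Q_i=\bar Q_i=\emptyset$. The map $\pi_i\colon S_i\to S_{i+1}$ is $\varphi_i\circ\iota_i^{-1}$ on $\iota_i(P_i)$ and affine from $Q_i$ onto $\bar Q_i$; $\pi^{(i)}=\pi_{i-1}\circ\cdots\circ\pi_0$ ($\pi^{(0)}=\mathrm{id}$).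 Let $\mathring P_{0,0}=S$, $\mathring P_{0,j+1}=\mathring P_{0,j}\cap\iota_j(\mathring P_j)$ (viewing $\mathring P_{0,j}\subset S_j$). The sequence is completely disjoint if $Q_i\subset\mathring P_{0,i}$ in $S_i$ for every $i$. *)

(* Defs.v *)
From Stdlib Require Import Reals Lra ZArith List.
Open Scope R_scope.

(* A Riemannian circle of length L > 0 is modelled as R / L Z.
   Points are represented by real numbers; two reals represent the same
   point iff they are congruent modulo L. *)
Definition eqmod (L x y : R) : Prop := exists k : Z, x - y = IZR k * L.

Definition cdist (L x y : R) : R :=
  L * Rmin (frac_part ((x - y) / L)) (1 - frac_part ((x - y) / L)).

(* partitions  s = t_0 <= t_1 <= ... <= t_n = t  of [s,t], given as the list [t_1;...;t_n] *)
Fixpoint chain (s : R) (l : list R) (t : R) : Prop :=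
  match l with
  | nil => s = t
  | y :: l' => s <= y /\ chain y l' t
  end.

Fixpoint psum (L : R) (g : R -> R) (s : R) (l : list R) : R :=
  match l with
  | nil => 0
  | y :: l' => cdist L (g s) (g y) + psum L g y l'
  end.

Definition path_length_is (L : R) (g : R -> R) (s t len : R) : Prop :=
  is_lub (fun r => exists l, chain s l t /\ r = psum L g s l) len.

Definition path_continuous (L : R) (g : R -> R) (a b : R) : Prop :=
  forall s, a <= s <= b -> forall eps, 0 < eps ->
    exists d, 0 < d /\ forall t, a <= t <= b -> Rabs (t - s) < d ->
      cdist L (g s) (g t) < eps.

Definition unit_speed (L : R) (g : R -> R) (a b : R) : Prop :=
  a <= b /\ path_continuous L g a b /\
  forall s t, a <= s -> s <= t -> t <= b -> path_length_is L g s t (t - s).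

Definition inj_closed (L : R) (g : R -> R) (a b : R) : Prop :=
  forall s t, a <= s <= b -> a <= t <= b -> eqmod L (g s) (g t) -> s = t.

Definition inj_open (L : R) (g : R -> R) (a b : R) : Prop :=
  forall s t, a < s < b -> a < t < b -> eqmod L (g s) (g t) -> s = t.

Definition closed_segment (L : R) (Q : R -> Prop) (q : R) (g : R -> R) : Prop :=
  0 <= q /\ unit_speed L g 0 q /\ inj_closed L g 0 q /\
  forall x, Q x <-> exists s, 0 <= s <= q /\ eqmod L x (g s).

Definition Qset (L : R) (g : R -> R) (p : R) : R -> Prop :=
  fun x => ~ exists t, 0 < t < p /\ eqmod L x (g t).

(* One step i of a tightening sequence.  L0 = |S|, Li = |S_i|, Lj = |S_{i+1}|,
   P_i = [0,p] in case (a); q = |Q_i|, qb = |Qbar_i|; pi = pi_i.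
   kind = true : case (a);  kind = false : case (b). *)
Definition tightening_step (L0 Li Lj p q qb : R) (iota phi pi : R -> R)
  (kind : bool) : Prop :=
  if kind then
    L0 / 2 <= p /\ Lj < Li /\
    unit_speed Li iota 0 p /\ inj_closed Li iota 0 p /\
    unit_speed Lj phi 0 p /\ inj_open Lj phi 0 p /\
    qb < q /\
    (forall x y, eqmod Li x y -> eqmod Lj (pi x) (pi y)) /\
    (* pi_i = phi_i o iota_i^{-1} on iota_i(P_i) *)
    (forall t, 0 <= t <= p -> eqmod Lj (pi (iota t)) (phi t)) /\
    (exists g gb, closed_segment Li (Qset Li iota p) q g /\
                  closed_segment Lj (Qset Lj phi p) qb gb /\
                  forall s, 0 <= s <= q -> eqmod Lj (pi (g s)) (gb (s * qb / q)))
  else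
    Lj = Li /\ q = 0 /\ qb = 0 /\ forall x, eqmod Li (pi x) x.

Definition tightening_sequence (L : nat -> R) (kind : nat -> bool)
  (p q qb : nat -> R) (iota phi pi : nat -> R -> R) : Prop :=
  (forall i, 0 < L i) /\
  forall i, tightening_step (L 0%nat) (L i) (L (S i)) (p i) (q i) (qb i)
              (iota i) (phi i) (pi i) (kind i).

Definition iota_int (L : nat -> R) (kind : nat -> bool) (p : nat -> R)
  (iota : nat -> R -> R) (j : nat) (x : R) : Prop :=
  if kind j then exists t, 0 < t < p j /\ eqmod (L j) x (iota j t) else True.

(* P_{0,j}^circ as a subset of S_j: P_{0,0} = S, and
   P_{0,j+1} = (P_{0,j} cap iota_j(P_j^circ)) transported to S_{j+1} (via pi_j) *)
Fixpoint Pint (L : nat -> R) (kind : nat -> bool) (p : nat -> R)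
  (iota pi : nat -> R -> R) (j : nat) : R -> Prop :=
  match j with
  | O => fun _ => True
  | S j' => fun y => exists x, Pint L kind p iota pi j' x /\
              iota_int L kind p iota j' x /\ eqmod (L (S j')) y (pi j' x)
  end.

Definition completely_disjoint (L : nat -> R) (kind : nat -> bool) (p : nat -> R)
  (iota pi : nat -> R -> R) : Prop :=
  forall i, kind i = true -> forall x, Qset (L i) (iota i) (p i) x ->
    Pint L kind p iota pi i x.

Fixpoint pi_up (pi : nat -> R -> R) (i : nat) (x : R) : R :=
  match i with
  | O => x
  | S i' => pi i' (pi_up pi i' x)
  end.

Definition pseudometric_on_circle (L0 : R) (d : R -> R -> R) : Prop :=
  (forall x x' y, eqmod L0 x x' -> d x y = d x' y) /\
  (forall x y, 0 <= d x y) /\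
  (forall x, d x x = 0) /\
  (forall x y, d x y = d y x) /\
  (forall x y z, d x z <= d x y + d y z).

(* Main.v *)
Require Import Defs.
From Stdlib Require Import Reals.
From Stdlib Require Import Lra Lia ZArith IndefiniteDescription.
Open Scope R_scope.

Lemma eqmod_refl L x : eqmod L x x.
Proof. exists 0%Z. simpl. ring. Qed.
Lemma eqmod_sym L x y : eqmod L x y -> eqmod L y x.
Proof. intros [k Hk]. exists (- k)%Z. rewrite opp_IZR. lra. Qed.
Lemma eqmod_trans L x y z : eqmod L x y -> eqmod L y z -> eqmod L x z.
Proof. intros [k Hk] [m Hm]. exists (k + m)%Z. rewrite plus_IZR. lra. Qed.
Lemma eqmod_addL L x y k : x - y = IZR k * L -> eqmod L x y.
Proof. intros H; exists k; exact H. Qed.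
Lemma eqmod_plusL L x : eqmod L (x + L) x.
Proof. exists 1%Z. simpl. ring. Qed.
Lemma eqmod_shift L x y a : eqmod L x y -> eqmod L (a + x) (a + y).
Proof. intros [k Hk]. exists k. lra. Qed.
Lemma eqmod_sign L x y e : (e = 1 \/ e = -1) -> eqmod L x y -> eqmod L (e * x) (e * y).
Proof. intros [->| ->] [k Hk]. exists k; lra. exists (-k)%Z; rewrite opp_IZR; lra. Qed.
Lemma eqmod_sub0 L x y : eqmod L (x - y) 0 -> eqmod L x y.
Proof. intros [k Hk]. exists k. lra. Qed.
Lemma eqmod_0sub L x y : eqmod L x y -> eqmod L (x - y) 0.
Proof. intros [k Hk]. exists k. lra. Qed.

Lemma int_small L k : 0 < L -> Rabs (IZR k * L) < L -> k = 0%Z.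
Proof.
  intros HL H. apply Rabs_def2 in H. destruct H as [H1 H2].
  assert (A: IZR k < 1). { apply Rmult_lt_reg_r with L; lra. }
  assert (B: -1 < IZR k). { apply Rmult_lt_reg_r with L; lra. }
  apply lt_IZR in A. apply lt_IZR in B. lia.
Qed.
Lemma eqmod_small L x y : 0 < L -> eqmod L x y -> Rabs (x - y) < L -> x = y.
Proof.
  intros HL [k Hk] H. rewrite Hk in H. apply int_small in H; auto. subst. simpl in Hk. lra.
Qed.
Lemma eqmod_pos_small L x : 0 < L -> eqmod L x 0 -> 0 < x < L -> False.
Proof.
  intros HL [k Hk] H. 
  assert (A: IZR k < 1). { apply Rmult_lt_reg_r with L; lra. }
  assert (B: 0 < IZR k). { apply Rmult_lt_reg_r with L; lra. }
  apply lt_IZR in A. apply lt_IZR in B. lia.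
Qed.
Lemma eqmod_01 L x : 0 < L -> eqmod L x 0 -> -L < x < 2 * L -> x = 0 \/ x = L.
Proof.
  intros HL [k Hk] H.
  assert (A: IZR k < 2). { apply Rmult_lt_reg_r with L; lra. }
  assert (B: -1 < IZR k). { apply Rmult_lt_reg_r with L; lra. }
  apply lt_IZR in A. apply lt_IZR in B.
  assert (k = 0 \/ k = 1)%Z as [->| ->] by lia; simpl in Hk; lra.
Qed.

Lemma cdist_diff L x y : cdist L x y = cdist L (x - y) 0.
Proof. unfold cdist. replace (x - y - 0) with (x - y) by ring. reflexivity. Qed.

Lemma cdist_le L x y k : 0 < L -> cdist L x y <= Rabs (x - y - IZR k * L).
Proof.
  intros HL. unfold cdist, frac_part.
  set (z := (x - y) / L). set (n := Int_part z).
  assert (Hx: x - y = z * L) by (unfold z; field; lra).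
  destruct (base_fp z) as [F1 F2]. unfold frac_part in F1, F2. fold n in F1, F2.
  rewrite Hx. replace (z * L - IZR k * L) with (L * ((z - IZR n) + IZR (n - k))) by (rewrite minus_IZR; ring).
  rewrite Rabs_mult, (Rabs_pos_eq L) by lra.
  apply Rmult_le_compat_l; [lra|].
  destruct (Z_le_gt_dec 0 (n - k)) as [Hm|Hm].
  - apply IZR_le in Hm. rewrite Rabs_pos_eq by lra. apply Rle_trans with (z - IZR n). apply Rmin_l. lra.
  - assert (Hm': IZR (n - k) <= -1) by (apply IZR_le; lia).
    rewrite Rabs_left by lra. apply Rle_trans with (1 - (z - IZR n)). apply Rmin_r. lra.
Qed.

Lemma cdist_rep L x y : 0 < L -> exists k, cdist L x y = Rabs (x - y - IZR k * L) /\ Rabs (x - y - IZR k * L) <= L / 2.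
Proof.
  intros HL. unfold cdist, frac_part.
  set (z := (x - y) / L). set (n := Int_part z).
  assert (Hx: x - y = z * L) by (unfold z; field; lra).
  destruct (base_fp z) as [F1 F2]. unfold frac_part in F1, F2. fold n in F1, F2.
  rewrite Hx.
  destruct (Rle_dec (z - IZR n) (1 - (z - IZR n))) as [H|H].
  - exists n. rewrite Rmin_left by lra.
    replace (z * L - IZR n * L) with (L * (z - IZR n)) by ring.
    rewrite Rabs_mult, !Rabs_pos_eq by lra. split. reflexivity.
    apply Rle_trans with (L * (1/2)); [apply Rmult_le_compat_l; lra| lra].
  - exists (n + 1)%Z. rewrite Rmin_right by lra. rewrite plus_IZR.
    replace (z * L - (IZR n + 1) * L) with (- (L * (1 - (z - IZR n)))) by ring.
    rewrite Rabs_Ropp, Rabs_mult, !Rabs_pos_eq by lra. split. reflexivity.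
    apply Rle_trans with (L * (1/2)); [apply Rmult_le_compat_l; lra| lra].
Qed.

Lemma cdist_nonneg L x y : 0 < L -> 0 <= cdist L x y.
Proof. intros HL. destruct (cdist_rep L x y HL) as [k [-> _]]. apply Rabs_pos. Qed.

Lemma cdist_half L x y : 0 < L -> cdist L x y <= L / 2.
Proof. intros HL. destruct (cdist_rep L x y HL) as [k [-> H]]. exact H. Qed.

Lemma cdist_refl L x : 0 < L -> cdist L x x = 0.
Proof.
  intros HL. apply Rle_antisym; [|apply cdist_nonneg; auto].
  eapply Rle_trans. apply (cdist_le L x x 0 HL). simpl. rewrite Rmult_0_l. 
  replace (x - x - 0) with 0 by ring. rewrite Rabs_R0. lra.
Qed.

Lemma cdist_triangle L x y z : 0 < L -> cdist L x z <= cdist L x y + cdist L y z.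
Proof.
  intros HL. destruct (cdist_rep L x y HL) as [k1 [E1 _]]. destruct (cdist_rep L y z HL) as [k2 [E2 _]].
  rewrite E1, E2. eapply Rle_trans. apply (cdist_le L x z (k1 + k2) HL).
  rewrite plus_IZR. replace (x - z - (IZR k1 + IZR k2) * L) with ((x - y - IZR k1 * L) + (y - z - IZR k2 * L)) by ring.
  apply Rabs_triang.
Qed.

Lemma cdist_sym L x y : 0 < L -> cdist L x y = cdist L y x.
Proof.
  intros HL. apply Rle_antisym.
  - destruct (cdist_rep L y x HL) as [k [E _]]. rewrite E. eapply Rle_trans. apply (cdist_le L x y (-k) HL).
    rewrite opp_IZR. replace (x - y - - IZR k * L) with (- (y - x - IZR k * L)) by ring. rewrite Rabs_Ropp. lra.
  - destruct (cdist_rep L x y HL) as [k [E _]]. rewrite E. eapply Rle_trans. apply (cdist_le L y x (-k) HL).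
    rewrite opp_IZR. replace (y - x - - IZR k * L) with (- (x - y - IZR k * L)) by ring. rewrite Rabs_Ropp. lra.
Qed.

Lemma cdist_eqmod_l L x x' y : 0 < L -> eqmod L x x' -> cdist L x y = cdist L x' y.
Proof.
  intros HL Hm.
  assert (forall a b, eqmod L a b -> cdist L a y <= cdist L b y).
  { intros a b [j Hj]. destruct (cdist_rep L b y HL) as [k [E _]]. rewrite E.
    eapply Rle_trans. apply (cdist_le L a y (j + k) HL). rewrite plus_IZR.
    replace (a - y - (IZR j + IZR k) * L) with (b - y - IZR k * L) by lra. lra. }
  apply Rle_antisym; apply H; auto. apply eqmod_sym; auto.
Qed.

Lemma cdist_eqmod L x x' y y' : 0 < L -> eqmod L x x' -> eqmod L y y' -> cdist L x y = cdist L x' y'.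
Proof.
  intros HL H1 H2. rewrite (cdist_eqmod_l L x x' y HL H1). rewrite (cdist_sym L x' y HL), (cdist_sym L x' y' HL).
  apply cdist_eqmod_l; auto.
Qed.

Lemma cdist_small L d : 0 < L -> Rabs d <= L / 2 -> cdist L d 0 = Rabs d.
Proof.
  intros HL Hd. apply Rle_antisym.
  - eapply Rle_trans. apply (cdist_le L d 0 0 HL). simpl. replace (d - 0 - 0 * L) with d by ring. lra.
  - destruct (cdist_rep L d 0 HL) as [k [E _]]. rewrite E.
    destruct (Z.eq_dec k 0) as [->|Hk].
    + simpl. replace (d - 0 - 0 * L) with d by ring. lra.
    + assert (1 <= Rabs (IZR k)).
      { destruct (Z_le_gt_dec k 0). assert (IZR k <= -1) by (apply IZR_le; lia). rewrite Rabs_left by lra. lra.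
        assert (1 <= IZR k) by (apply IZR_le; lia). rewrite Rabs_pos_eq by lra. lra. }
      assert (Rabs (IZR k * L) >= L). { rewrite Rabs_mult, (Rabs_pos_eq L) by lra. nra. }
      pose proof (Rabs_triang_inv (IZR k * L) d).
      replace (d - 0 - IZR k * L) with (- (IZR k * L - d)) by ring. rewrite Rabs_Ropp. lra.
Qed.

Lemma cdist_interval L e : 0 < L -> 0 <= e <= L -> cdist L e 0 = Rmin e (L - e).
Proof.
  intros HL He. apply Rle_antisym.
  - apply Rmin_glb.
    + eapply Rle_trans. apply (cdist_le L e 0 0 HL). simpl. replace (e - 0 - 0 * L) with e by ring. rewrite Rabs_pos_eq; lra.
    + eapply Rle_trans. apply (cdist_le L e 0 1 HL). simpl. replace (e - 0 - 1 * L) with (- (L - e)) by ring. rewrite Rabs_Ropp, Rabs_pos_eq; lra.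
  - destruct (cdist_rep L e 0 HL) as [k [E _]]. rewrite E.
    destruct (Z_le_gt_dec k 0) as [Hk|Hk].
    + assert (IZR k <= 0) by (apply IZR_le; lia).
      apply Rle_trans with e. apply Rmin_l. rewrite Rabs_pos_eq; nra.
    + assert (1 <= IZR k) by (apply IZR_le; lia).
      apply Rle_trans with (L - e). apply Rmin_r. rewrite Rabs_left1; nra.
Qed.

Lemma cdist_opp L d : 0 < L -> cdist L (- d) 0 = cdist L d 0.
Proof.
  intros HL. rewrite (cdist_sym L d 0 HL). rewrite (cdist_diff L 0 d).
  f_equal; ring.
Qed.

Lemma cdist_zero_eqmod L x y : 0 < L -> cdist L x y = 0 -> eqmod L x y.
Proof.
  intros HL H. destruct (cdist_rep L x y HL) as [k [E _]]. rewrite H in E. exists k.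
  symmetry in E. destruct (Rcase_abs (x - y - IZR k * L)); [rewrite Rabs_left in E by lra|rewrite Rabs_right in E by lra]; lra.
Qed.

Lemma eqmod_cdist L x y : 0 < L -> eqmod L x y -> cdist L x y = 0.
Proof.
  intros HL H. rewrite (cdist_eqmod_l L x y y HL H). apply cdist_refl; auto.
Qed.

Lemma KL1 L g T s t : 0 < L -> unit_speed L g 0 T -> 0 <= s -> s <= t -> t <= T ->
  cdist L (g s) (g t) <= t - s.
Proof.
  intros HL [_ [_ H]] H1 H2 H3. destruct (H s t H1 H2 H3) as [Hub _].
  apply Hub. exists (cons t nil). split. simpl. split; auto. simpl. ring.
Qed.

Definition rk (L d : R) : Z :=
  if Rle_dec (frac_part (d/L)) (1 - frac_part (d/L)) then Int_part (d/L) else (Int_part (d/L) + 1)%Z.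
Definition rp (L d : R) : R := d - IZR (rk L d) * L.

Lemma rp_spec L d : 0 < L -> cdist L d 0 = Rabs (rp L d).
Proof.
  intros HL. unfold rp, rk, cdist, frac_part. replace (d - 0) with d by ring.
  set (z := d / L). set (n := Int_part z).
  assert (Hx: d = z * L) by (unfold z; field; lra).
  destruct (base_fp z) as [F1 F2]. unfold frac_part in F1, F2. fold n in F1, F2.
  destruct (Rle_dec (z - IZR n) (1 - (z - IZR n))) as [H|H].
  - rewrite Rmin_left by lra. rewrite Hx.
    replace (z * L - IZR n * L) with (L * (z - IZR n)) by ring.
    rewrite Rabs_mult, !Rabs_pos_eq by lra. reflexivity.
  - rewrite Rmin_right by lra. rewrite plus_IZR. rewrite Hx.
    replace (z * L - (IZR n + 1) * L) with (- (L * (1 - (z - IZR n)))) by ring.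
    rewrite Rabs_Ropp, Rabs_mult, !Rabs_pos_eq by lra. reflexivity.
Qed.

Definition clamp (s t x : R) := Rmax s (Rmin t x).
Lemma clamp_in s t x : s <= t -> s <= clamp s t x <= t.
Proof. intros. unfold clamp, Rmax, Rmin. repeat destruct Rle_dec; lra. Qed.
Lemma clamp_id s t x : s <= x <= t -> clamp s t x = x.
Proof. intros. unfold clamp, Rmax, Rmin. repeat destruct Rle_dec; lra. Qed.
Lemma clamp_lip s t x y : s <= t -> Rabs (clamp s t x - clamp s t y) <= Rabs (x - y).
Proof. intros. unfold clamp, Rmax, Rmin. repeat destruct Rle_dec; split_Rabs; lra. Qed.

Lemma mono_aux (G : R -> R) s t : continuity G -> s < t ->
  (forall x y, s <= x <= t -> s <= y <= t -> G x = G y -> x = y) -> G s < G t ->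
  forall x, s <= x <= t -> G s <= G x <= G t.
Proof.
  intros HC Hst Hinj Hlt x Hx. split.
  - destruct (Rle_dec (G s) (G x)) as [|Hn]; auto. exfalso.
    destruct (IVT_cor (fun z => G z - G s) x t) as [z [Hz Ez]].
    + apply continuity_minus; auto. apply continuity_const. intros a b; reflexivity.
    + lra.
    + cbv beta. assert (G x - G s < 0) by lra. assert (G t - G s > 0) by lra. nra.
    + cbv beta in Ez. assert (z = s) by (apply Hinj; lra). assert (x = s) by lra. subst. lra.
  - destruct (Rle_dec (G x) (G t)) as [|Hn]; auto. exfalso.
    destruct (IVT_cor (fun z => G z - G t) s x) as [z [Hz Ez]].
    + apply continuity_minus; auto. apply continuity_const. intros a b; reflexivity.
    + lra.
    + cbv beta. assert (G s - G t < 0) by lra. assert (G x - G t > 0) by lra. nra.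
    + cbv beta in Ez. assert (z = t) by (apply Hinj; lra). assert (x = t) by lra. subst. lra.
Qed.

Lemma mono_inc (G : R -> R) s t : continuity G -> s < t ->
  (forall x y, s <= x <= t -> s <= y <= t -> G x = G y -> x = y) -> G s < G t ->
  forall x y, s <= x -> x <= y -> y <= t -> G x <= G y.
Proof.
  intros HC Hst Hinj Hlt x y H1 H2 H3.
  destruct (Req_dec x t) as [->|Hxt]. assert (y = t) by lra. subst; lra.
  assert (Gx: G x < G t).
  { destruct (mono_aux G s t HC Hst Hinj Hlt x) as [_ A]. lra.
    destruct A as [A|A]; auto. exfalso. apply Hxt. apply Hinj; lra. }
  assert (Hinj' : forall a b, x <= a <= t -> x <= b <= t -> G a = G b -> a = b) by (intros; apply Hinj; lra).
  destruct (mono_aux G x t HC ltac:(lra) Hinj' Gx y) as [A _]; lra.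
Qed.

Lemma mono_sign (G : R -> R) s t : continuity G -> s < t ->
  (forall x y, s <= x <= t -> s <= y <= t -> G x = G y -> x = y) ->
  (forall x y, s <= x -> x <= y -> y <= t -> G x <= G y) \/
  (forall x y, s <= x -> x <= y -> y <= t -> G y <= G x).
Proof.
  intros HC Hst Hinj.
  destruct (Rtotal_order (G s) (G t)) as [H|[H|H]].
  - left. apply mono_inc; auto.
  - exfalso. assert (s = t) by (apply Hinj; lra). lra.
  - right. intros x y H1 H2 H3.
    assert (- G x <= - G y); [|lra].
    apply (mono_inc (fun z => - G z) s t (continuity_opp G HC) Hst).
    + intros a b Ha Hb E. apply Hinj; auto. lra.
    + lra.
    + exact H1. + exact H2. + exact H3.
Qed.

Lemma chain_le s l t : chain s l t -> s <= t.
Proof.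
  revert s. induction l as [|y l IH]; simpl; intros s H. lra. destruct H as [H1 H2]. apply IH in H2. lra.
Qed.

Lemma psum_tele L g (G : R -> R) s t :
  ((forall x y, s <= x -> x <= y -> y <= t -> G x <= G y) \/
   (forall x y, s <= x -> x <= y -> y <= t -> G y <= G x)) ->
  (forall x y, s <= x -> x <= y -> y <= t -> cdist L (g x) (g y) <= Rabs (G y - G x)) ->
  forall l x, s <= x -> chain x l t -> psum L g x l <= Rabs (G t - G x).
Proof.
  intros Hm Hc. induction l as [|y l IH]; simpl; intros x Hx Hch.
  - subst. unfold Rminus. rewrite Rplus_opp_r, Rabs_R0. lra.
  - destruct Hch as [H1 H2]. pose proof (chain_le _ _ _ H2) as H3.
    specialize (IH y ltac:(lra) H2). specialize (Hc x y Hx H1 H3).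
    assert (Rabs (G y - G x) + Rabs (G t - G y) = Rabs (G t - G x)).
    { destruct Hm as [Hm|Hm].
      - pose proof (Hm x y Hx H1 H3). pose proof (Hm y t ltac:(lra) H3 ltac:(lra)).
        rewrite !Rabs_pos_eq by lra. ring.
      - pose proof (Hm x y Hx H1 H3). pose proof (Hm y t ltac:(lra) H3 ltac:(lra)).
        rewrite !Rabs_left1 by lra. ring. }
    lra.
Qed.

Lemma KL2 L g T s t : 0 < L -> unit_speed L g 0 T -> inj_open L g 0 T ->
  0 < s -> s < t -> t < T -> t - s <= L / 4 -> t - s <= cdist L (g s) (g t).
Proof.
  intros HL Hu Hinj H1 H2 H3 H4.
  pose (G := fun x => rp L (g (clamp s t x) - g s)).
  assert (Gabs : forall x, s <= x <= t -> Rabs (G x) = cdist L (g x) (g s)).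
  { intros x Hx. unfold G. rewrite clamp_id by lra. rewrite <- rp_spec by lra.
    rewrite <- cdist_diff. reflexivity. }
  assert (Gsmall : forall x, Rabs (G x) <= L / 4).
  { intros x. pose proof (clamp_in s t x ltac:(lra)). unfold G.
    rewrite <- rp_spec by lra. rewrite <- cdist_diff. rewrite cdist_sym by lra.
    pose proof (KL1 L g T s (clamp s t x) HL Hu ltac:(lra) ltac:(lra) ltac:(lra)). lra. }
  assert (Gdiff : forall x y, exists m, G y - G x = g (clamp s t y) - g (clamp s t x) - IZR m * L).
  { intros x y. unfold G, rp. exists (rk L (g (clamp s t y) - g s) - rk L (g (clamp s t x) - g s))%Z.
    rewrite minus_IZR. ring. }
  assert (HC : continuity G).
  { intros x0. unfold continuity_pt, continue_in, limit1_in, limit_in. simpl.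
    intros eps Heps. set (c0 := clamp s t x0).
    pose proof (clamp_in s t x0 ltac:(lra)) as Hc0.
    destruct Hu as [_ [Hpc _]].
    destruct (Hpc c0 ltac:(fold c0 in Hc0; lra) (Rmin eps (L/4)) ltac:(apply Rmin_glb_lt; lra)) as [d [Hd Hd2]].
    exists d. split; auto. intros x [_ Hx]. unfold Rdist in *.
    pose proof (clamp_in s t x ltac:(lra)) as Hc.
    pose proof (clamp_lip s t x x0 ltac:(lra)) as Hl. fold c0 in Hl.
    assert (Hcx: 0 <= clamp s t x <= T) by lra.
    assert (Hcl: Rabs (clamp s t x - c0) < d) by lra.
    specialize (Hd2 (clamp s t x) Hcx Hcl).
    destruct (Gdiff x0 x) as [m Hm].
    destruct (cdist_rep L (g (clamp s t x)) (g c0) HL) as [j [Ej _]].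
    rewrite cdist_sym in Ej by lra. rewrite Ej in Hd2.
    fold c0 in Hm.
    assert (Rabs (G x - G x0) <= L / 2).
    { pose proof (Gsmall x). pose proof (Gsmall x0). split_Rabs; lra. }
    assert (Hjm: j = m).
    { assert (Rabs (IZR (j - m) * L) < L).
      { rewrite minus_IZR. replace ((IZR j - IZR m) * L) with ((G x - G x0) - (g (clamp s t x) - g c0 - IZR j * L)) by lra.
        pose proof (Rmin_r eps (L/4)) as Q1.
        pose proof (Rabs_triang (G x - G x0) (- (g (clamp s t x) - g c0 - IZR j * L))) as Q2.
        rewrite Rabs_Ropp in Q2. fold (Rminus (G x - G x0) (g (clamp s t x) - g c0 - IZR j * L)) in Q2. lra. }
      apply int_small in H0; auto. lia. }
    subst j. rewrite Hm. pose proof (Rmin_l eps (L/4)). lra. }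
  assert (Hinj' : forall x y, s <= x <= t -> s <= y <= t -> G x = G y -> x = y).
  { intros x y Hx Hy E. destruct (Gdiff x y) as [m Hm]. rewrite !clamp_id in Hm by lra.
    apply Hinj; try lra. exists (- m)%Z. rewrite opp_IZR. lra. }
  assert (Hcd : forall x y, s <= x -> x <= y -> y <= t -> cdist L (g x) (g y) <= Rabs (G y - G x)).
  { intros x y Hx Hxy Hy. destruct (Gdiff x y) as [m Hm]. rewrite !clamp_id in Hm by lra.
    rewrite Hm. rewrite cdist_sym by lra. apply cdist_le; auto. }
  pose proof (mono_sign G s t HC H2 Hinj') as Hm.
  destruct Hu as [_ [_ Hlen]]. destruct (Hlen s t ltac:(lra) ltac:(lra) ltac:(lra)) as [_ Hlub].
  assert (t - s <= Rabs (G t - G s)).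
  { apply Hlub. intros r [l [Hch ->]]. apply (psum_tele L g G s t Hm Hcd l s ltac:(lra) Hch). }
  assert (G s = 0).
  { pose proof (Gabs s ltac:(lra)). rewrite cdist_refl in H0 by lra.
    destruct (Rcase_abs (G s)); [rewrite Rabs_left in H0|rewrite Rabs_right in H0]; lra. }
  rewrite H0, Rminus_0_r, Gabs in H by lra. rewrite cdist_sym by lra. exact H.
Qed.

Lemma KL3 L g T s t : 0 < L -> unit_speed L g 0 T -> inj_open L g 0 T ->
  0 <= s -> s <= t -> t <= T -> t - s <= L / 4 -> cdist L (g s) (g t) = t - s.
Proof.
  intros HL Hu Hinj H1 H2 H3 H4.
  destruct (Req_dec s t) as [<-|Hst]. rewrite cdist_refl by lra. ring.
  apply Rle_antisym. apply (KL1 L g T); auto.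
  destruct (Rle_dec (t - s) (cdist L (g s) (g t))) as [|Hn]; auto. exfalso.
  set (c := cdist L (g s) (g t)) in *.
  set (e := (t - s - c) / 8).
  assert (He: 0 < e) by (unfold e; lra).
  assert (Hc0 : 0 <= c) by (apply cdist_nonneg; auto).
  assert (He2: e < (t - s) / 4) by (unfold e; lra).
  pose proof (KL2 L g T (s + e) (t - e) HL Hu Hinj ltac:(lra) ltac:(lra) ltac:(lra) ltac:(lra)) as K.
  pose proof (cdist_triangle L (g (s + e)) (g s) (g (t - e)) HL) as T1.
  pose proof (cdist_triangle L (g s) (g t) (g (t - e)) HL) as T2.
  pose proof (KL1 L g T s (s + e) HL Hu ltac:(lra) ltac:(lra) ltac:(lra)) as K1.
  pose proof (KL1 L g T (t - e) t HL Hu ltac:(lra) ltac:(lra) ltac:(lra)) as K2.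
  rewrite (cdist_sym L (g (s + e)) (g s)) in T1 by lra.
  rewrite (cdist_sym L (g t) (g (t - e))) in T2 by lra.
  fold c in T2. unfold e in *. lra.
Qed.

Lemma KL4 L g T s t : 0 < L -> unit_speed L g 0 T -> inj_open L g 0 T ->
  0 <= s -> s <= t -> t <= T -> t - s <= L / 4 ->
  exists sg, (sg = 1 \/ sg = -1) /\ eqmod L (g t) (g s + sg * (t - s)).
Proof.
  intros HL Hu Hinj H1 H2 H3 H4.
  pose proof (KL3 L g T s t HL Hu Hinj H1 H2 H3 H4) as K.
  rewrite cdist_sym in K by lra.
  destruct (cdist_rep L (g t) (g s) HL) as [k [Ek _]]. rewrite K in Ek.
  destruct (Rcase_abs (g t - g s - IZR k * L)) as [Hn|Hp].
  - rewrite Rabs_left in Ek by lra. exists (-1). split; auto. exists k. lra.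
  - rewrite Rabs_right in Ek by lra. exists 1. split; auto. exists k. lra.
Qed.

Lemma sign_cases (a : R) : a = 1 \/ a = -1 -> (a = 1 \/ a = -1).
Proof. auto. Qed.

Lemma KL5 L g T : 0 < L -> 0 < T -> unit_speed L g 0 T -> inj_open L g 0 T ->
  exists eta, (eta = 1 \/ eta = -1) /\ forall t, 0 <= t <= T -> eqmod L (g t) (g 0 + eta * t).
Proof.
  intros HL HT Hu Hinj.
  set (h := L / 8). set (c := Rmin h T).
  assert (Hh : 0 < h) by (unfold h; lra).
  assert (Hc : 0 < c <= h /\ c <= T) by (unfold c; split; [split; [apply Rmin_glb_lt; lra| apply Rmin_l] | apply Rmin_r]).
  destruct (KL4 L g T 0 c HL Hu Hinj ltac:(lra) ltac:(lra) ltac:(lra) ltac:(unfold h in *; lra)) as [eta [Heta Ec]].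
  exists eta. split; auto.
  assert (Main : forall n : nat, forall t, 0 <= t <= T -> t <= INR n * h -> eqmod L (g t) (g 0 + eta * t)).
  { induction n as [|n IH]; intros t Ht Htn.
    - simpl in Htn. assert (t = 0) by lra. subst. replace (g 0 + eta * 0) with (g 0) by ring. apply eqmod_refl.
    - rewrite S_INR in Htn.
      destruct (Rle_dec t (INR n * h)) as [Hle|Hgt]. apply IH; auto.
      destruct n as [|n].
      + simpl in Hgt, Htn.
        destruct (KL4 L g T 0 t HL Hu Hinj ltac:(lra) ltac:(lra) ltac:(lra) ltac:(unfold h in *; lra)) as [sg [Hsg E1]].
        assert (Htc: t <= c) by (unfold c; apply Rmin_glb; lra).
        destruct (KL4 L g T t c HL Hu Hinj ltac:(lra) ltac:(lra) ltac:(lra) ltac:(unfold h in *; lra)) as [sg' [Hsg' E2]].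
        replace (t - 0) with t in E1 by ring.
        assert (E3: eqmod L (eta * c) (sg * t + sg' * (c - t))).
        { apply eqmod_sub0. apply eqmod_trans with (g c - g 0 - (g c - g 0)).
          2: replace (g c - g 0 - (g c - g 0)) with 0 by ring; apply eqmod_refl.
          destruct Ec as [k1 Hk1]. destruct E1 as [k2 Hk2]. destruct E2 as [k3 Hk3].
          exists (k2 + k3 - k1)%Z. rewrite minus_IZR, plus_IZR. lra. }
        apply eqmod_small in E3; [|lra|].
        2:{ destruct Heta as [-> | ->]; destruct Hsg as [-> | ->]; destruct Hsg' as [-> | ->];
            split_Rabs; unfold h in *; lra. }
        assert (sg = eta) by (destruct Heta as [-> | ->]; destruct Hsg as [-> | ->]; destruct Hsg' as [-> | ->]; lra).
        subst sg. exact E1.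
      + rewrite S_INR in Hgt, Htn.
        apply Rnot_le_lt in Hgt. set (m := (INR n + 1) * h) in *. set (u := INR n * h).
        assert (Hn0 : 0 <= INR n) by apply pos_INR.
        assert (Hu0 : 0 <= u) by (unfold u; nra).
        assert (Hmu : m = u + h) by (unfold m, u; ring).
        assert (Htm : t - m <= h) by (unfold m; lra).
        assert (Em : eqmod L (g m) (g 0 + eta * m)) by (apply IH; [split; nra|rewrite S_INR; unfold m; lra]).
        assert (Eu : eqmod L (g u) (g 0 + eta * u)) by (apply IH; [split; nra|rewrite S_INR; unfold u; nra]).
        destruct (KL4 L g T m t HL Hu Hinj ltac:(lra) ltac:(lra) ltac:(lra) ltac:(unfold h in *; lra)) as [s1 [Hs1 E1]].
        destruct (KL4 L g T u t HL Hu Hinj ltac:(lra) ltac:(lra) ltac:(lra) ltac:(unfold h in *; lra)) as [s2 [Hs2 E2]].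
        assert (E3: eqmod L (eta * h + s1 * (t - m)) (s2 * (t - u))).
        { destruct Em as [k1 Hk1]. destruct Eu as [k2 Hk2]. destruct E1 as [k3 Hk3]. destruct E2 as [k4 Hk4].
          exists (k4 - k3 + k2 - k1)%Z. repeat rewrite ?minus_IZR, ?plus_IZR. rewrite Hmu in *. lra. }
        apply eqmod_small in E3; [|lra|].
        2:{ destruct Heta as [-> | ->]; destruct Hs1 as [-> | ->]; destruct Hs2 as [-> | ->];
            split_Rabs; unfold h in *; lra. }
        assert (s2 = eta) by (destruct Heta as [-> | ->]; destruct Hs1 as [-> | ->]; destruct Hs2 as [-> | ->]; lra).
        subst s2. destruct Eu as [k1 Hk1]. destruct E2 as [k2 Hk2]. exists (k1 + k2)%Z. rewrite plus_IZR. lra. }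
  intros t Ht. destruct (INR_unbounded (t / h)) as [n Hn].
  apply (Main n); auto.
  apply Rmult_gt_compat_r with (r := h) in Hn; auto. unfold Rdiv in Hn. rewrite Rmult_assoc, Rinv_l in Hn by lra. lra.
Qed.

Lemma KL L g T : 0 < L -> unit_speed L g 0 T -> inj_open L g 0 T ->
  (exists eta, (eta = 1 \/ eta = -1) /\ forall t, 0 <= t <= T -> eqmod L (g t) (g 0 + eta * t)) /\ T <= L.
Proof.
  intros HL Hu Hinj.
  assert (HT: 0 <= T) by (destruct Hu; lra).
  destruct (Req_dec T 0) as [->|HT0].
  - split; [|lra]. exists 1. split; auto. intros t Ht. assert (t = 0) by lra. subst.
    replace (g 0 + 1 * 0) with (g 0) by ring. apply eqmod_refl.
  - destruct (KL5 L g T HL ltac:(lra) Hu Hinj) as [eta [Heta E]].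
    split. exists eta; auto.
    destruct (Rle_dec T L) as [|Hn]; auto. exfalso.
    set (t1 := (T - L) / 2).
    assert (t1 = t1 + L).
    { apply Hinj; try (unfold t1; lra).
      apply eqmod_trans with (g 0 + eta * t1). apply E; unfold t1; lra.
      apply eqmod_trans with (g 0 + eta * (t1 + L)). 2: apply eqmod_sym, E; unfold t1; lra.
      destruct Heta as [-> | ->]. exists (-1)%Z. simpl. ring. exists 1%Z. simpl. ring. }
    lra.
Qed.

Lemma KLc L g T : 0 < L -> unit_speed L g 0 T -> inj_closed L g 0 T ->
  (exists eta, (eta = 1 \/ eta = -1) /\ forall t, 0 <= t <= T -> eqmod L (g t) (g 0 + eta * t)) /\ T < L.
Proof.
  intros HL Hu Hinj.
  assert (Hinj' : inj_open L g 0 T) by (intros s t Hs Ht E; apply Hinj; auto; lra).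
  destruct (KL L g T HL Hu Hinj') as [[eta [Heta E]] HTL].
  split. exists eta; auto.
  destruct (Req_dec T L) as [->|]; [|lra]. exfalso.
  assert (0 = L). { apply Hinj; try lra. apply eqmod_trans with (g 0 + eta * L). 
    2: apply eqmod_sym, E; lra.
    destruct Heta as [-> | ->]. exists (-1)%Z. simpl. ring. exists 1%Z. simpl. ring. }
  lra.
Qed.

Lemma core_seg L p q s1 s2 z : 0 < L -> 0 < p <= L -> 0 < q < L -> 0 <= s1 <= q -> 0 <= s2 <= q ->
  (z = 1 \/ z = -1) ->
  (forall s t, 0 <= s <= q -> 0 < t < p -> ~ eqmod L (z * (s - s1)) t) ->
  eqmod L p (z * (s2 - s1)) ->
  q = L - p /\ ((z = 1 /\ s1 = L - p) \/ (z = -1 /\ s1 = 0)).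
Proof.
  intros HL Hp Hq H1 H2 Hz Hav [k Hk].
  assert (Hb: -L < z * (s2 - s1) < L) by (destruct Hz as [-> | ->]; lra).
  assert (Hk0: (0 <= k)%Z).
  { assert (-1 < IZR k); [|apply lt_IZR in H; lia]. apply Rmult_lt_reg_r with L; lra. }
  assert (Hk1: (k <= 1)%Z).
  { assert (IZR k < 2); [|apply lt_IZR in H; lia]. apply Rmult_lt_reg_r with L; lra. }
  assert (k = 0 \/ k = 1)%Z as [->| ->] by lia; simpl in Hk.
  - exfalso. apply (Hav ((s1 + s2) / 2) (p / 2)). lra. lra.
    apply eqmod_addL with 0%Z. simpl. lra.
  - destruct Hz as [-> | ->].
    + assert (Hs1a: L - p <= s1) by lra.
      assert (Hs1b: q <= s1).
      { destruct (Rle_dec q s1) as [|Hn]; auto. exfalso.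
        set (e := Rmin (q - s1) p / 2).
        assert (0 < e /\ e <= (q - s1)/2 /\ e <= p / 2).
        { unfold e. pose proof (Rmin_l (q - s1) p). pose proof (Rmin_r (q - s1) p).
          split. apply Rmult_lt_0_compat; [apply Rmin_glb_lt|]; lra. lra. }
        apply (Hav (s1 + e) e). lra. lra. apply eqmod_addL with 0%Z. simpl. lra. }
      assert (Hs1c: s1 <= L - p).
      { destruct (Rle_dec s1 (L - p)) as [|Hn]; auto. exfalso.
        apply (Hav ((s1 - L + p) / 2) ((L + p - s1) / 2)). lra. lra.
        apply eqmod_addL with (-1)%Z. simpl. lra. }
      split. lra. left. split; lra.
    + assert (Hs1a: s1 = 0).
      { destruct (Req_dec s1 0) as [|Hn]; auto. exfalso.
        set (e := Rmin s1 p / 2).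
        assert (0 < e /\ e <= s1/2 /\ e <= p / 2).
        { unfold e. pose proof (Rmin_l s1 p). pose proof (Rmin_r s1 p).
          split. apply Rmult_lt_0_compat; [apply Rmin_glb_lt|]; lra. lra. }
        apply (Hav (s1 - e) e). lra. lra. apply eqmod_addL with 0%Z. simpl. lra. }
      subst s1.
      assert (Hq1: L - p <= q) by lra.
      assert (Hq2: q <= L - p).
      { destruct (Rle_dec q (L - p)) as [|Hn]; auto. exfalso.
        apply (Hav ((L - p + q) / 2) ((L + p - q) / 2)). lra. lra.
        apply eqmod_addL with (-1)%Z. simpl. lra. }
      split. lra. right. split; lra.
Qed.

Lemma seg_lemma L p q a e (gam g : R -> R) : 0 < L -> 0 < p <= L -> 0 < q -> (e = 1 \/ e = -1) ->
  (forall t, 0 <= t <= p -> eqmod L (gam t) (a + e * t)) ->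
  closed_segment L (Qset L gam p) q g ->
  p < L /\ q = L - p /\
  ((forall s, 0 <= s <= q -> eqmod L (g s) (a + e * (p + s))) \/
   (forall s, 0 <= s <= q -> eqmod L (g s) (a - e * s))).
Proof.
  intros HL Hp Hq He Hgam [_ [Hu [Hinj HQ]]].
  destruct (KLc L g q HL Hu Hinj) as [[eta [Heta Eg]] HqL].
  assert (Qa : Qset L gam p a).
  { intros [t [Ht E]]. apply eqmod_trans with (z := a + e * t) in E; [|apply Hgam; lra].
    destruct E as [k Hk]. apply (eqmod_pos_small L t HL).
    destruct He as [-> | ->]; [exists (-k)%Z | exists k]; rewrite ?opp_IZR; lra. lra. }
  assert (Qb : Qset L gam p (a + e * p)).
  { intros [t [Ht E]]. apply eqmod_trans with (z := a + e * t) in E; [|apply Hgam; lra].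
    destruct E as [k Hk]. apply (eqmod_pos_small L (p - t) HL).
    destruct He as [-> | ->]; [exists k | exists (-k)%Z]; rewrite ?opp_IZR; lra. lra. }
  destruct (proj1 (HQ a) Qa) as [s1 [Hs1 E1]].
  destruct (proj1 (HQ _) Qb) as [s2 [Hs2 E2]].
  assert (Gs : forall s, 0 <= s <= q -> eqmod L (g s) (a + eta * (s - s1))).
  { intros s Hs. destruct (Eg s Hs) as [k1 Hk1]. destruct (Eg s1 Hs1) as [k2 Hk2]. destruct E1 as [k3 Hk3].
    exists (k1 - k2 - k3)%Z. rewrite !minus_IZR. lra. }
  set (z := e * eta).
  assert (Hz : z = 1 \/ z = -1) by (unfold z; destruct He as [-> | ->]; destruct Heta as [-> | ->]; lra).
  assert (Heta' : eta = e * z) by (unfold z; destruct He as [-> | ->]; lra).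
  assert (Hav : forall s t, 0 <= s <= q -> 0 < t < p -> ~ eqmod L (z * (s - s1)) t).
  { intros s t Hs Ht E. apply (proj2 (HQ (g s)) (ex_intro _ s (conj Hs (eqmod_refl L (g s))))).
    exists t. split; auto. apply eqmod_trans with (a + eta * (s - s1)). apply Gs; auto.
    apply eqmod_trans with (a + e * t). 2: apply eqmod_sym, Hgam; lra.
    apply eqmod_shift. rewrite Heta', Rmult_assoc. apply eqmod_sign; auto. }
  assert (H2 : eqmod L p (z * (s2 - s1))).
  { assert (eqmod L (a + e * p) (a + eta * (s2 - s1))) by (apply eqmod_trans with (g s2); auto).
    destruct H as [k Hk]. rewrite Heta' in Hk.
    destruct He as [-> | ->]; [exists k | exists (-k)%Z]; rewrite ?opp_IZR; lra. }
  destruct (core_seg L p q s1 s2 z HL Hp ltac:(lra) Hs1 Hs2 Hz Hav H2) as [Hq' [[-> Hs] | [-> Hs]]].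
  - split. lra. split. auto. left. intros s Hs'.
    apply eqmod_trans with (a + eta * (s - s1)). apply Gs; auto. rewrite Heta', Hs.
    destruct He as [-> | ->]; [exists (-1)%Z | exists 1%Z]; simpl; ring.
  - split. lra. split. auto. right. intros s Hs'.
    apply eqmod_trans with (a + eta * (s - s1)). apply Gs; auto. rewrite Heta', Hs.
    apply eqmod_addL with 0%Z. simpl. ring.
Qed.

Lemma qset_ends L p a e (gam : R -> R) : 0 < L -> 0 < p <= L -> (e = 1 \/ e = -1) ->
  (forall t, 0 <= t <= p -> eqmod L (gam t) (a + e * t)) ->
  Qset L gam p a /\ Qset L gam p (a + e * p).
Proof.
  intros HL Hp He Hgam. split.
  - intros [t [Ht E]]. apply eqmod_trans with (z := a + e * t) in E; [|apply Hgam; lra].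
    destruct E as [k Hk]. apply (eqmod_pos_small L t HL).
    destruct He as [-> | ->]; [exists (-k)%Z | exists k]; rewrite ?opp_IZR; lra. lra.
  - intros [t [Ht E]]. apply eqmod_trans with (z := a + e * t) in E; [|apply Hgam; lra].
    destruct E as [k Hk]. apply (eqmod_pos_small L (p - t) HL).
    destruct He as [-> | ->]; [exists k | exists (-k)%Z]; rewrite ?opp_IZR; lra. lra.
Qed.

Lemma sign_contra L p b e : 0 < L -> 0 < p < L -> (e = 1 \/ e = -1) -> eqmod L b (b + e * p) -> False.
Proof.
  intros HL Hp He [k Hk]. apply (eqmod_pos_small L p HL); [|lra].
  destruct He as [-> | ->]; [exists (-k)%Z | exists k]; rewrite ?opp_IZR; lra.
Qed.

Lemma step_struct L0 Li Lj p q qb iota phi pi : 0 < L0 -> 0 < Li -> 0 < Lj ->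
  tightening_step L0 Li Lj p q qb iota phi pi true ->
  exists a e b e' r, (e = 1 \/ e = -1) /\ (e' = 1 \/ e' = -1) /\ 0 <= r <= 1 /\ 0 <= p <= Li /\
    Lj = r * Li + (1 - r) * p /\ Li - q <= Lj /\ 0 <= q /\
    forall w, 0 <= w < Li -> eqmod Lj (pi (a + e * w)) (b + e' * (r * w + (1 - r) * Rmin w p)).
Proof.
  intros H0 Hi Hj. simpl.
  intros [Hp2 [HLj [Hiu [Hii [Hpu [Hpo [Hqb [Hwd [Hpio [g [gb [Hg [Hgb Hpg]]]]]]]]]]]]].
  assert (Hp : 0 < p) by lra.
  destruct (KLc Li iota p Hi Hiu Hii) as [[e [He Ei]] HpLi].
  destruct (KL Lj phi p Hj Hpu Hpo) as [[e' [He' Ep]] HpLj].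
  set (a := iota 0) in *. set (b := phi 0) in *.
  assert (Hq0 : 0 <= qb) by (destruct Hgb; lra).
  assert (Hq : 0 < q) by lra.
  destruct (seg_lemma Li p q a e iota g Hi ltac:(lra) Hq He Ei Hg) as [_ [Hqe Hor]].
  assert (PIa : eqmod Lj (pi a) b).
  { apply eqmod_trans with (phi 0). apply Hpio; lra. apply eqmod_refl. }
  assert (PIp : eqmod Lj (pi (a + e * p)) (b + e' * p)).
  { apply eqmod_trans with (pi (iota p)). apply Hwd, eqmod_sym, Ei; lra.
    apply eqmod_trans with (phi p). apply Hpio; lra. replace (b + e' * p) with (b + e' * p) by ring. apply Ep; lra. }
  assert (Hqbar : Lj = p + qb /\
     ((qb = 0 /\ forall x, eqmod Lj (gb 0) x -> eqmod Lj x b -> True) \/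
      (0 < qb /\ ((forall s, 0 <= s <= qb -> eqmod Lj (gb s) (b + e' * (p + s))) \/
                  (forall s, 0 <= s <= qb -> eqmod Lj (gb s) (b - e' * s)))))).
  { destruct (Req_dec qb 0) as [Hz|Hnz].
    - split; [|left; split; auto]. subst qb.
      destruct (Req_dec p Lj) as [|Hne]; [lra|]. exfalso.
      destruct (qset_ends Lj p b e' phi Hj ltac:(lra) He' ltac:(intros; apply Ep; lra)) as [Q1 Q2].
      destruct Hgb as [_ [_ [_ HQ]]].
      destruct (proj1 (HQ _) Q1) as [s [Hs E1]]. destruct (proj1 (HQ _) Q2) as [s' [Hs' E2]].
      assert (s = 0) by lra. assert (s' = 0) by lra. subst.
      apply (sign_contra Lj p b e' Hj ltac:(lra) He'). apply eqmod_trans with (gb 0); auto. apply eqmod_sym; auto.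
    - destruct (seg_lemma Lj p qb b e' phi gb Hj ltac:(lra) ltac:(lra) He' ltac:(intros; apply Ep; lra) Hgb) as [_ [Hqbe Hor']].
      split. lra. right. split. lra. exact Hor'. }
  destruct Hqbar as [HLjp Hqbar].
  set (r := qb / q).
  assert (Hr : 0 <= r < 1).
  { unfold r. split. apply Rmult_le_pos; [lra| left; apply Rinv_0_lt_compat; lra].
    apply Rmult_lt_reg_r with q; auto. unfold Rdiv. rewrite Rmult_assoc, Rinv_l by lra. lra. }
  assert (Hrq : r * q = qb) by (unfold r; field; lra).
  assert (Hsr : forall s, s * qb / q = s * r) by (intros; unfold r; field; lra).
  exists a, e, b, e', r. split; auto. split; auto. split. lra. split. lra.
  split. rewrite HLjp, <- Hrq, Hqe. ring. split. lra. split. lra.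
  intros w Hw.
  destruct (Rle_dec w p) as [Hwp|Hwp].
  - rewrite Rmin_left by lra. replace (r * w + (1 - r) * w) with w by ring.
    apply eqmod_trans with (pi (iota w)). apply Hwd, eqmod_sym, Ei; lra.
    apply eqmod_trans with (phi w). apply Hpio; lra. apply Ep; lra.
  - rewrite Rmin_right by lra.
    destruct Hor as [HA|HB].
    + set (s := w - p).
      assert (Hs : 0 <= s <= q) by (unfold s; lra).
      assert (E1 : eqmod Lj (pi (a + e * w)) (gb (s * r))).
      { apply eqmod_trans with (pi (g s)). apply Hwd. apply eqmod_sym.
        replace (a + e * w) with (a + e * (p + s)) by (unfold s; ring). apply HA; auto.
        rewrite <- Hsr. apply Hpg; auto. }
      assert (G0 : eqmod Lj (gb 0) (b + e' * p)).
      { apply eqmod_trans with (pi (g 0)). { pose proof (Hpg 0 ltac:(lra)) as Z.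
        replace (0 * qb / q) with 0 in Z by (field; lra). apply eqmod_sym; exact Z. } apply eqmod_trans with (pi (a + e * p)). apply Hwd. 
        replace (a + e * p) with (a + e * (p + 0)) by ring. apply HA; lra. exact PIp. }
      destruct Hqbar as [[Hz _] | [Hpos [HA'|HB']]].
      * assert (r = 0) by (unfold r; rewrite Hz; field; lra). rewrite H in E1 |- *.
        replace (s * 0) with 0 in E1 by ring. replace (b + e' * (0 * w + (1 - 0) * p)) with (b + e' * p) by ring.
        apply eqmod_trans with (gb 0); auto.
      * apply eqmod_trans with (gb (s * r)); auto.
        replace (b + e' * (r * w + (1 - r) * p)) with (b + e' * (p + s * r)) by (unfold s; ring).
        apply HA'. split. apply Rmult_le_pos; lra. rewrite <- Hrq. nra.
      * exfalso. apply (sign_contra Lj p b e' Hj ltac:(lra) He').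
        apply eqmod_trans with (gb 0); [|auto]. apply eqmod_sym.
        pose proof (HB' 0 ltac:(lra)) as Z. replace (b - e' * 0) with b in Z by ring. exact Z.
    + set (s := Li - w).
      assert (Hs : 0 <= s <= q) by (unfold s; lra).
      assert (E1 : eqmod Lj (pi (a + e * w)) (gb (s * r))).
      { apply eqmod_trans with (pi (g s)). apply Hwd. apply eqmod_sym.
        apply eqmod_trans with (a - e * s). apply HB; auto.
        unfold s. destruct He as [-> | ->]; [exists (-1)%Z | exists 1%Z]; simpl; ring.
        rewrite <- Hsr. apply Hpg; auto. }
      assert (G0 : eqmod Lj (gb 0) b).
      { apply eqmod_trans with (pi (g 0)). { pose proof (Hpg 0 ltac:(lra)) as Z.
        replace (0 * qb / q) with 0 in Z by (field; lra). apply eqmod_sym; exact Z. } apply eqmod_trans with (pi a). apply Hwd.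
        pose proof (HB 0 ltac:(lra)) as Z. replace (a - e * 0) with a in Z by ring. exact Z. exact PIa. }
      destruct Hqbar as [[Hz _] | [Hpos [HA'|HB']]].
      * assert (r = 0) by (unfold r; rewrite Hz; field; lra). rewrite H in E1 |- *.
        replace (s * 0) with 0 in E1 by ring.
        apply eqmod_trans with (gb 0); auto. apply eqmod_trans with b; auto.
        replace (b + e' * (0 * w + (1 - 0) * p)) with (b + e' * Lj) by (rewrite HLjp, Hz; ring).
        destruct He' as [-> | ->]; [exists (-1)%Z | exists 1%Z]; simpl; ring.
      * exfalso. apply (sign_contra Lj p b e' Hj ltac:(lra) He').
        apply eqmod_trans with (gb 0); [apply eqmod_sym; auto|].
        replace (b + e' * p) with (b + e' * (p + 0)) by ring. apply HA'; lra.
      * apply eqmod_trans with (gb (s * r)); auto.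
        apply eqmod_trans with (b - e' * (s * r)). apply HB'.
        split. apply Rmult_le_pos; lra. rewrite <- Hrq. nra.
        assert (Hid : b + e' * (r * w + (1 - r) * p) - (b - e' * (s * r)) = e' * Lj).
        { unfold s. rewrite HLjp, <- Hrq, Hqe. ring. }
        destruct He' as [-> | ->]; [exists (-1)%Z | exists 1%Z]; simpl; lra.
Qed.

Lemma Int_part_plus1 x : Int_part (x + 1) = (Int_part x + 1)%Z.
Proof.
  unfold Int_part. destruct (archimed x) as [A B].
  assert (up (x + 1) = (up x + 1)%Z).
  { symmetry. apply tech_up; rewrite plus_IZR; lra. }
  rewrite H. lia.
Qed.

Section Lift.
Variables (Li Lj p r : R).
Hypothesis HLi : 0 < Li.
Hypothesis Hp : 0 <= p <= Li.
Hypothesis Hr : 0 <= r <= 1.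

Definition NN v := Int_part (v / Li).
Definition WW v := v - IZR (NN v) * Li.
Definition KK v := IZR (NN v) * p + Rmin (WW v) p.
Definition HH v := r * v + (1 - r) * KK v.

Lemma WW_range v : 0 <= WW v < Li.
Proof.
  unfold WW, NN. destruct (base_Int_part (v / Li)) as [A B].
  assert (v = (v / Li) * Li) by (field; lra).
  split; nra.
Qed.

Lemma NN_plus v : NN (v + Li) = (NN v + 1)%Z.
Proof.
  unfold NN. replace ((v + Li) / Li) with (v / Li + 1) by (field; lra). apply Int_part_plus1.
Qed.

Lemma WW_plus v : WW (v + Li) = WW v.
Proof. unfold WW. rewrite NN_plus, plus_IZR. ring. Qed.

Lemma NN_mono v v' : v <= v' -> (NN v <= NN v')%Z.
Proof.
  intros H. unfold NN. destruct (base_Int_part (v / Li)) as [A B]. destruct (base_Int_part (v' / Li)) as [A' B'].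
  assert (v / Li <= v' / Li) by (apply Rmult_le_compat_r; [left; apply Rinv_0_lt_compat|]; lra).
  destruct (Z_le_gt_dec (Int_part (v / Li)) (Int_part (v' / Li))); auto.
  assert (IZR (Int_part (v' / Li)) + 1 <= IZR (Int_part (v / Li))) by (rewrite <- plus_IZR; apply IZR_le; lia).
  lra.
Qed.

Lemma v_decomp v : v = IZR (NN v) * Li + WW v.
Proof. unfold WW. ring. Qed.

Lemma KK_mono v v' : v <= v' -> 0 <= KK v' - KK v <= v' - v.
Proof.
  intros H. pose proof (NN_mono v v' H) as HN.
  pose proof (WW_range v). pose proof (WW_range v').
  pose proof (v_decomp v). pose proof (v_decomp v').
  unfold KK.
  destruct (Z.eq_dec (NN v) (NN v')) as [E|E].
  - rewrite E in *. unfold Rmin; repeat destruct Rle_dec; lra.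
  - assert (Hm : 1 <= IZR (NN v') - IZR (NN v)) by (rewrite <- minus_IZR; apply IZR_le; lia).
    set (m := IZR (NN v') - IZR (NN v)) in *.
    assert (IZR (NN v') = IZR (NN v) + m) by (unfold m; ring).
    rewrite H4 in *. set (n := IZR (NN v)) in *.
    unfold Rmin; repeat destruct Rle_dec; nra.
Qed.

Lemma HH_mono v v' : v <= v' -> 0 <= HH v' - HH v <= v' - v.
Proof.
  intros H. pose proof (KK_mono v v' H). unfold HH. nra.
Qed.

Lemma HH_plus v : Lj = r * Li + (1 - r) * p -> HH (v + Li) = HH v + Lj.
Proof.
  intros E. unfold HH, KK. rewrite NN_plus, WW_plus, plus_IZR. rewrite E. ring.
Qed.

Lemma HH_form v : Lj = r * Li + (1 - r) * p -> HH v = IZR (NN v) * Lj + (r * WW v + (1 - r) * Rmin (WW v) p).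
Proof.
  intros E. unfold HH, KK. rewrite E. rewrite (v_decomp v) at 1. ring.
Qed.
End Lift.

Lemma lift_lemma Li Lj p r a e b e' (pi : R -> R) : 0 < Li -> 0 < Lj -> 0 <= p <= Li -> 0 <= r <= 1 ->
  (e = 1 \/ e = -1) -> (e' = 1 \/ e' = -1) -> Lj = r * Li + (1 - r) * p ->
  (forall x y, eqmod Li x y -> eqmod Lj (pi x) (pi y)) ->
  (forall w, 0 <= w < Li -> eqmod Lj (pi (a + e * w)) (b + e' * (r * w + (1 - r) * Rmin w p))) ->
  exists (h : R -> R) sg, (sg = 1 \/ sg = -1) /\ (forall x, eqmod Lj (pi x) (h x)) /\
    (forall x y, x <= y -> 0 <= sg * (h y - h x) <= y - x) /\
    (forall x, h (x + Li) = h x + sg * Lj).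
Proof.
  intros HLi HLj Hp Hr He He' ELj Hwd Hform.
  exists (fun x => b + e' * HH Li p r (e * (x - a))), (e * e').
  split. destruct He as [-> | ->]; destruct He' as [-> | ->]; lra.
  split.
  - intros x. set (v := e * (x - a)). assert (Hv: v = e * (x - a)) by reflexivity. clearbody v.
    pose proof (WW_range Li p HLi Hp v) as HW.
    assert (Ex : eqmod Li x (a + e * WW Li v)).
    { pose proof (v_decomp Li v) as D.
      destruct He as [-> | ->]; [exists (NN Li v) | exists (- NN Li v)%Z]; rewrite ?opp_IZR; lra. }
    apply eqmod_trans with (pi (a + e * WW Li v)). apply Hwd; auto.
    apply eqmod_trans with (b + e' * (r * WW Li v + (1 - r) * Rmin (WW Li v) p)). apply Hform; auto.
    rewrite (HH_form Li Lj p r v ELj).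
    destruct He' as [-> | ->]; [exists (- NN Li v)%Z | exists (NN Li v)]; rewrite ?opp_IZR; lra.
  - split.
    + intros x y Hxy. destruct He as [-> | ->].
      * pose proof (HH_mono Li p r HLi Hp Hr (1 * (x - a)) (1 * (y - a)) ltac:(lra)).
        destruct He' as [-> | ->]; lra.
      * pose proof (HH_mono Li p r HLi Hp Hr (-1 * (y - a)) (-1 * (x - a)) ltac:(lra)).
        destruct He' as [-> | ->]; lra.
    + intros x. destruct He as [-> | ->].
      * replace (1 * (x + Li - a)) with (1 * (x - a) + Li) by ring.
        rewrite (HH_plus Li Lj p r HLi (1 * (x - a)) ELj). ring.
      * pose proof (HH_plus Li Lj p r HLi (-1 * (x + Li - a)) ELj) as Q.
        replace (-1 * (x + Li - a) + Li) with (-1 * (x - a)) in Q by ring.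
        rewrite Q. ring.
Qed.

Fixpoint Phi (H : nat -> (R -> R) * R) (i : nat) (x : R) : R :=
  match i with O => x | S j => fst (H j) (Phi H j x) end.
Fixpoint Sg (H : nat -> (R -> R) * R) (i : nat) : R :=
  match i with O => 1 | S j => snd (H j) * Sg H j end.

Lemma cv_const c : Un_cv (fun _ => c) c.
Proof. intros eps He. exists O. intros n _. unfold Rdist. replace (c - c) with 0 by ring. rewrite Rabs_R0. lra. Qed.

Lemma cv_bounds (u : nat -> R) l a b : Un_cv u l -> (forall n, a <= u n <= b) -> a <= l <= b.
Proof.
  intros Hu Hb. split.
  - eapply Rle_cv_lim; [|apply cv_const|exact Hu]. intros n; apply Hb.
  - eapply Rle_cv_lim; [|exact Hu|apply cv_const]. intros n; apply Hb.
Qed.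

Lemma cv_ext (u v : nat -> R) l : (forall n, u n = v n) -> Un_cv u l -> Un_cv v l.
Proof. intros E H eps He. destruct (H eps He) as [N HN]. exists N. intros n Hn. rewrite <- E. auto. Qed.

Lemma cv_min (u v : nat -> R) a b : Un_cv u a -> Un_cv v b -> Un_cv (fun n => Rmin (u n) (v n)) (Rmin a b).
Proof.
  intros Hu Hv eps He. destruct (Hu eps He) as [N1 H1]. destruct (Hv eps He) as [N2 H2].
  exists (max N1 N2). intros n Hn. specialize (H1 n ltac:(lia)). specialize (H2 n ltac:(lia)).
  unfold Rdist in *. unfold Rmin. repeat destruct Rle_dec; split_Rabs; lra.
Qed.

Lemma sign_sq s : s = 1 \/ s = -1 -> s * s = 1.
Proof. intros [-> | ->]; ring. Qed.

Section Assembly.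
Variables (L : nat -> R) (H : nat -> (R -> R) * R) (pi : nat -> R -> R) (Linf : R).
Hypothesis HL : forall i, 0 < L i.
Hypothesis Hsg : forall i, snd (H i) = 1 \/ snd (H i) = -1.
Hypothesis Hlift : forall i x, eqmod (L (S i)) (pi i x) (fst (H i) x).
Hypothesis Hmono : forall i x y, x <= y -> 0 <= snd (H i) * (fst (H i) y - fst (H i) x) <= y - x.
Hypothesis Hper : forall i x, fst (H i) (x + L i) = fst (H i) x + snd (H i) * L (S i).
Hypothesis Hwd : forall i x y, eqmod (L i) x y -> eqmod (L (S i)) (pi i x) (pi i y).
Hypothesis HLinf : Un_cv L Linf.
Hypothesis HLpos : 0 < Linf.

Definition ee i x y := Sg H i * (Phi H i y - Phi H i x).

Lemma Sg_sign i : Sg H i = 1 \/ Sg H i = -1.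
Proof. induction i; simpl. auto. destruct (Hsg i) as [-> | ->]; destruct IHi as [-> | ->]; lra. Qed.

Lemma P_lift i x : eqmod (L i) (pi_up pi i x) (Phi H i x).
Proof.
  induction i; simpl. apply eqmod_refl.
  apply eqmod_trans with (pi i (Phi H i x)). apply Hwd; auto. apply Hlift.
Qed.

Lemma P_wd i x y : eqmod (L 0) x y -> eqmod (L i) (pi_up pi i x) (pi_up pi i y).
Proof. intros E. induction i; simpl; auto. Qed.

Lemma Hper_m i x : fst (H i) (x - L i) = fst (H i) x - snd (H i) * L (S i).
Proof. pose proof (Hper i (x - L i)). replace (x - L i + L i) with x in H0 by ring. lra. Qed.

Lemma P_per i x : Phi H i (x + L 0) = Phi H i x + Sg H i * L i.
Proof.
  induction i; simpl. ring. rewrite IHi.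
  destruct (Sg_sign i) as [E|E]; rewrite E.
  - replace (Phi H i x + 1 * L i) with (Phi H i x + L i) by ring. rewrite Hper. ring.
  - replace (Phi H i x + -1 * L i) with (Phi H i x - L i) by ring. rewrite Hper_m. ring.
Qed.

Lemma step_mono i x y : 0 <= ee i x y -> 0 <= ee (S i) x y <= ee i x y.
Proof.
  intros Hp. unfold ee in *. simpl.
  set (a := Phi H i x) in *. set (b := Phi H i y) in *.
  destruct (Sg_sign i) as [E|E]; rewrite E in *.
  - pose proof (Hmono i a b ltac:(lra)). lra.
  - pose proof (Hmono i b a ltac:(lra)). lra.
Qed.

Lemma ee_bounds i x y : x <= y -> 0 <= ee i x y <= y - x.
Proof.
  intros Hxy. induction i. unfold ee; simpl; lra.
  pose proof (step_mono i x y ltac:(lra)). lra.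
Qed.

Lemma P_mono i x y : x <= y -> 0 <= ee (S i) x y <= ee i x y.
Proof. intros Hxy. apply step_mono. apply ee_bounds; auto. Qed.

Lemma ee_cv x y : x <= y -> exists l, Un_cv (fun i => ee i x y) l.
Proof.
  intros Hxy. destruct (decreasing_cv (fun i => ee i x y)) as [l Hl].
  - intros n. apply (P_mono n x y Hxy).
  - exists 0. intros z [n ->]. unfold opp_seq. pose proof (ee_bounds n x y Hxy). lra.
  - exists l; auto.
Qed.

Lemma ee0_cv x : exists l, Un_cv (fun i => ee i 0 x) l.
Proof.
  destruct (Rle_dec 0 x) as [Hx|Hx]. apply ee_cv; auto.
  destruct (ee_cv x 0 ltac:(lra)) as [l Hl]. exists (- l).
  apply cv_ext with (opp_seq (fun i => ee i x 0)). intros n. unfold opp_seq, ee. ring.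
  apply CV_opp; auto.
Qed.

Definition FF x := proj1_sig (constructive_indefinite_description _ (ee0_cv x)).
Lemma FF_cv x : Un_cv (fun i => ee i 0 x) (FF x).
Proof. unfold FF. destruct (constructive_indefinite_description _ _). auto. Qed.

Lemma ee_FF x y : Un_cv (fun i => ee i x y) (FF y - FF x).
Proof.
  apply cv_ext with (fun i => ee i 0 y - ee i 0 x). intros n. unfold ee. ring.
  apply CV_minus; apply FF_cv.
Qed.

Lemma FF_mono x y : x <= y -> 0 <= FF y - FF x <= y - x.
Proof. intros Hxy. apply (cv_bounds _ _ _ _ (ee_FF x y)). intros n. apply ee_bounds; auto. Qed.

Lemma FF_lip x y : Rabs (FF y - FF x) <= Rabs (y - x).
Proof.
  destruct (Rle_dec x y). pose proof (FF_mono x y r). rewrite !Rabs_pos_eq; lra.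
  pose proof (FF_mono y x ltac:(lra)). rewrite !Rabs_left1; lra.
Qed.

Lemma FF_per x : FF (x + L 0) = FF x + Linf.
Proof.
  apply (UL_sequence (fun i => ee i 0 (x + L 0))). apply FF_cv.
  apply cv_ext with (fun i => ee i 0 x + L i).
  intros n. unfold ee. rewrite P_per. pose proof (sign_sq _ (Sg_sign n)). 
  replace (Sg H n * (Phi H n x + Sg H n * L n - Phi H n 0)) with (Sg H n * (Phi H n x - Phi H n 0) + (Sg H n * Sg H n) * L n) by ring.
  rewrite H0. ring.
  apply CV_plus. apply FF_cv. auto.
Qed.

Lemma FF_0 : FF 0 = 0.
Proof.
  apply (UL_sequence (fun i => ee i 0 0)). apply FF_cv.
  apply cv_ext with (fun _ => 0). intros n. unfold ee. ring. apply cv_const.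
Qed.

Lemma FF_perZ x n : FF (x + IZR n * L 0) = FF x + IZR n * Linf.
Proof.
  assert (Hnat : forall m x, FF (x + INR m * L 0) = FF x + INR m * Linf).
  { induction m; intros z. simpl. rewrite !Rmult_0_l, !Rplus_0_r. auto.
    rewrite S_INR. replace (z + (INR m + 1) * L 0) with ((z + INR m * L 0) + L 0) by ring.
    rewrite FF_per, IHm. ring. }
  destruct (Z_le_gt_dec 0 n).
  - rewrite <- (Z2Nat.id n) by lia. rewrite <- INR_IZR_INZ. apply Hnat.
  - pose proof (Hnat (Z.to_nat (- n)) (x + IZR n * L 0)).
    rewrite INR_IZR_INZ, Z2Nat.id in H0 by lia. rewrite opp_IZR in H0.
    replace (x + IZR n * L 0 + - IZR n * L 0) with x in H0 by ring. lra.
Qed.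

Lemma FF_cont : continuity FF.
Proof.
  intros x0. unfold continuity_pt, continue_in, limit1_in, limit_in. simpl. unfold Rdist.
  intros eps He. exists eps. split; auto. intros x [_ Hx]. pose proof (FF_lip x0 x). lra.
Qed.

Lemma assembly_conv x y :
  Un_cv (fun i => cdist (L i) (pi_up pi i x) (pi_up pi i y)) (cdist Linf (FF x) (FF y)).
Proof.
  assert (HL0 := HL 0).
  set (n := Int_part ((y - x) / L 0)).
  set (y' := y - IZR n * L 0).
  assert (Hy' : x <= y' < x + L 0).
  { unfold y', n. destruct (base_Int_part ((y - x) / L 0)) as [A B].
    assert (y - x = ((y - x) / L 0) * L 0) by (field; lra). nra. }
  assert (Eyy : eqmod (L 0) y y') by (exists n; unfold y'; ring).
  apply cv_ext with (fun i => Rmin (ee i x y') (L i - ee i x y')).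
  - intros i. rewrite (cdist_eqmod (L i) _ _ _ _ (HL i) (P_lift i x) (P_wd i y y' Eyy)).
    rewrite (cdist_eqmod (L i) (Phi H i x) (Phi H i x) (pi_up pi i y') (Phi H i y') (HL i) (eqmod_refl _ _) (P_lift i y')).
    assert (Hb : 0 <= ee i x y' <= L i).
    { pose proof (ee_bounds i x y' ltac:(lra)). pose proof (ee_bounds i y' (x + L 0) ltac:(lra)).
      assert (ee i x y' + ee i y' (x + L 0) = L i).
      { unfold ee. rewrite P_per. pose proof (sign_sq _ (Sg_sign i)).
        replace (Sg H i * (Phi H i y' - Phi H i x) + Sg H i * (Phi H i x + Sg H i * L i - Phi H i y')) with ((Sg H i * Sg H i) * L i) by ring.
        rewrite H2; ring. }
      lra. }
    rewrite <- (cdist_interval (L i) _ (HL i) Hb).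
    unfold ee. rewrite (cdist_sym (L i) (Phi H i x) (Phi H i y') (HL i)), (cdist_diff (L i) (Phi H i y') (Phi H i x)).
    destruct (Sg_sign i) as [-> | ->].
    + f_equal. ring.
    + replace (-1 * (Phi H i y' - Phi H i x)) with (- (Phi H i y' - Phi H i x)) by ring.
      rewrite cdist_opp by auto. reflexivity.
  - assert (EF : FF y = FF y' + IZR n * Linf).
    { unfold y'. rewrite <- FF_perZ. f_equal. ring. }
    assert (Hb : 0 <= FF y' - FF x <= Linf).
    { pose proof (FF_mono x y' ltac:(lra)). pose proof (FF_mono y' (x + L 0) ltac:(lra)).
      rewrite FF_per in H1. lra. }
    replace (cdist Linf (FF x) (FF y)) with (Rmin (FF y' - FF x) (Linf - (FF y' - FF x))).
    + apply cv_min. apply ee_FF. apply CV_minus; auto. apply ee_FF.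
    + rewrite <- (cdist_interval Linf _ HLpos Hb). rewrite (cdist_sym Linf (FF x) (FF y) HLpos), (cdist_diff Linf (FF y) (FF x)).
      apply cdist_eqmod; auto. exists (- n)%Z. rewrite EF, opp_IZR. ring. apply eqmod_refl.
Qed.

Lemma assembly_surj z : exists x, eqmod Linf (FF x) z.
Proof.
  set (k := Int_part (z / Linf)).
  set (z0 := z - IZR k * Linf).
  assert (Hz0 : 0 <= z0 < Linf).
  { unfold z0, k. destruct (base_Int_part (z / Linf)) as [A B].
    assert (z = (z / Linf) * Linf) by (field; lra). nra. }
  destruct (IVT_cor (fun x => FF x - z0) 0 (L 0)) as [x [Hx Ex]].
  - apply continuity_minus. apply FF_cont. apply continuity_const. intros a b; reflexivity.
  - left; apply HL.
  - cbv beta. replace (L 0) with (0 + L 0) by ring. rewrite FF_per, FF_0. nra.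
  - exists x. cbv beta in Ex. exists (- k)%Z. rewrite opp_IZR. unfold z0 in Ex. lra.
Qed.

Lemma assembly_wd x x' y : eqmod (L 0) x x' -> cdist Linf (FF x) (FF y) = cdist Linf (FF x') (FF y).
Proof.
  intros E. apply (UL_sequence (fun i => cdist (L i) (pi_up pi i x) (pi_up pi i y))).
  apply assembly_conv.
  apply cv_ext with (fun i => cdist (L i) (pi_up pi i x') (pi_up pi i y)).
  intros i. apply cdist_eqmod; auto. apply eqmod_sym, P_wd; auto. apply eqmod_refl.
  apply assembly_conv.
Qed.
End Assembly.

Lemma step_all L0 Li Lj p q qb iota phi pi k : 0 < L0 -> 0 < Li -> 0 < Lj ->
  tightening_step L0 Li Lj p q qb iota phi pi k ->
  exists hs : (R -> R) * R, (snd hs = 1 \/ snd hs = -1) /\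
    (forall x, eqmod Lj (pi x) (fst hs x)) /\
    (forall x y, x <= y -> 0 <= snd hs * (fst hs y - fst hs x) <= y - x) /\
    (forall x, fst hs (x + Li) = fst hs x + snd hs * Lj) /\
    (forall x y, eqmod Li x y -> eqmod Lj (pi x) (pi y)) /\
    Lj <= Li /\ Li - q <= Lj /\ 0 <= q.
Proof.
  intros H0 Hi Hj Hs. destruct k.
  - pose proof Hs as Hs'.
    destruct Hs' as [_ [HLj [_ [_ [_ [_ [_ [Hwd _]]]]]]]].
    destruct (step_struct L0 Li Lj p q qb iota phi pi H0 Hi Hj Hs) as [a [e [b [e' [r [He [He' [Hr [Hp [ELj [Hq1 [Hq2 Hform]]]]]]]]]]]].
    destruct (lift_lemma Li Lj p r a e b e' pi Hi Hj Hp Hr He He' ELj Hwd Hform) as [h [sg [Hsg [H1 [H2 H3]]]]].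
    exists (h, sg). simpl. do 5 (split; [auto|]). repeat split; lra.
  - destruct Hs as [ELj [Eq [Eqb Hpi]]]. subst Lj.
    assert (Hwd : forall x y, eqmod Li x y -> eqmod Li (pi x) (pi y)).
    { intros x y E. apply eqmod_trans with x; auto. apply eqmod_trans with y; auto. apply eqmod_sym; auto. }
    destruct (lift_lemma Li Li 0 1 0 1 0 1 pi Hi Hi ltac:(lra) ltac:(lra) ltac:(auto) ltac:(auto) ltac:(ring) Hwd)
      as [h [sg [Hsg [H1 [H2 H3]]]]].
    { intros w Hw. replace (0 + 1 * w) with w by ring. replace (0 + 1 * (1 * w + (1 - 1) * Rmin w 0)) with w by ring. auto. }
    exists (h, sg). simpl. do 5 (split; [auto|]). repeat split; lra.
Qed.

Theorem lemma4p1 (L : nat -> R) (kind : nat -> bool) (p q qb : nat -> R)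
  (iota phi pi : nat -> R -> R) :
  tightening_sequence L kind p q qb iota phi pi ->
  completely_disjoint L kind p iota pi ->
  (exists s, Un_cv (fun n => sum_f_R0 q n) s /\ s < L 0%nat) ->
  exists Linf, Un_cv L Linf /\ 0 < Linf /\
  exists delta : R -> R -> R,
    (forall x y, Un_cv (fun i => cdist (L i) (pi_up pi i x) (pi_up pi i y))
                       (delta x y)) /\
    pseudometric_on_circle (L 0%nat) delta /\
    exists f : R -> R,
      (forall z, exists x, eqmod Linf (f x) z) /\
      (forall x y, cdist Linf (f x) (f y) = delta x y).
Proof.
  intros [HL Hst] _ [s [Hs HsL]].
  pose (P := fun i (hs : (R -> R) * R) => (snd hs = 1 \/ snd hs = -1) /\
    (forall x, eqmod (L (S i)) (pi i x) (fst hs x)) /\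
    (forall x y, x <= y -> 0 <= snd hs * (fst hs y - fst hs x) <= y - x) /\
    (forall x, fst hs (x + L i) = fst hs x + snd hs * L (S i)) /\
    (forall x y, eqmod (L i) x y -> eqmod (L (S i)) (pi i x) (pi i y)) /\
    L (S i) <= L i /\ L i - q i <= L (S i) /\ 0 <= q i).
  assert (Hex : forall i, exists hs, P i hs).
  { intros i. apply (step_all (L 0%nat) (L i) (L (S i)) (p i) (q i) (qb i) (iota i) (phi i) (pi i) (kind i)); auto. }
  set (H := fun i => proj1_sig (constructive_indefinite_description _ (Hex i))).
  assert (HP : forall i, P i (H i)).
  { intros i. unfold H. destruct (constructive_indefinite_description _ _). auto. }
  assert (Hq0 : forall i, 0 <= q i) by (intros i; apply (HP i)).
  assert (Hdec : forall i, L (S i) <= L i) by (intros i; apply (HP i)).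
  assert (Hlow : forall i, L i - q i <= L (S i)) by (intros i; apply (HP i)).
  assert (Hgrow : Un_growing (fun n => sum_f_R0 q n)).
  { intros n. simpl. pose proof (Hq0 (S n)). lra. }
  assert (Hsn : forall n, sum_f_R0 q n <= s) by (intros n; apply (growing_ineq _ s Hgrow Hs)).
  assert (Hs0 : 0 <= s) by (pose proof (Hsn 0%nat); simpl in *; pose proof (Hq0 0%nat); lra).
  assert (HLS : forall n, L 0%nat - sum_f_R0 q n <= L (S n)).
  { induction n. simpl. apply Hlow. simpl. pose proof (Hlow (S n)). lra. }
  assert (HLb : forall n, L 0%nat - s <= L n).
  { intros [|n]. lra. pose proof (HLS n). pose proof (Hsn n). lra. }
  destruct (decreasing_cv L) as [Linf HLinf].
  { intros n. apply Hdec. }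
  { exists (s - L 0%nat). intros z [n ->]. unfold opp_seq. pose proof (HLb n). lra. }
  assert (HLpos : 0 < Linf).
  { assert (L 0%nat - s <= Linf). { eapply Rle_cv_lim; [|apply cv_const|exact HLinf]. intros n; apply HLb. } lra. }
  exists Linf. split; auto. split; auto.
  assert (Hsg : forall i, snd (H i) = 1 \/ snd (H i) = -1) by (intros i; apply (HP i)).
  assert (Hlift : forall i x, eqmod (L (S i)) (pi i x) (fst (H i) x)) by (intros i; apply (HP i)).
  assert (Hmono : forall i x y, x <= y -> 0 <= snd (H i) * (fst (H i) y - fst (H i) x) <= y - x) by (intros i; apply (HP i)).
  assert (Hper : forall i x, fst (H i) (x + L i) = fst (H i) x + snd (H i) * L (S i)) by (intros i; apply (HP i)).
  assert (Hwd : forall i x y, eqmod (L i) x y -> eqmod (L (S i)) (pi i x) (pi i y)) by (intros i; apply (HP i)).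
  set (F := FF H Hsg Hmono).
  exists (fun x y => cdist Linf (F x) (F y)).
  split. { intros x y. exact (assembly_conv L H pi Linf HL Hsg Hlift Hmono Hper Hwd HLinf HLpos x y). }
  split.
  { split. { intros x x' y E. exact (assembly_wd L H pi Linf HL Hsg Hlift Hmono Hper Hwd HLinf HLpos x x' y E). }
    split. { intros; apply cdist_nonneg; auto. }
    split. { intros; apply cdist_refl; auto. }
    split. { intros; apply cdist_sym; auto. }
    intros; apply cdist_triangle; auto. }
  exists F. split.
  - intros z. eapply assembly_surj; eauto.
  - intros; reflexivity.
Qed.
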